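(* The triple $(X,\tau,\mathcal{P})$ is a $\mathcal{P}P$-space if and only if every essential ideal of $C(X)_\mathcal{P}$ is a $z$-ideal.
   Context: Let $(X,\tau)$ be a $T_1$ topological space and $\mathcal{P}$ an ideal of closed subsets of $X$ (a nonempty family of closed sets closed under finite unions and under taking closed subsets). For $f\colon X\to\mathbb{R}$, $D_f$ denotes the set of points of discontinuity of $f$, and $C(X)_\mathcal{P}=\{f\colon X\to\mathbb{R} : \overline{D_f}\in\mathcal{P}\}$, a commutative ring with unity under pointwise operations. $(X,\tau,\mathcal{P})$ is a $\mathcal{P}P$-space if $C(X)_\mathcal{P}$ is von Neumann regular. An ideal is essential if it intersects every nonzero ideal nontrivially. In a commutative ring, $M(a)$ is the intersection of all maximal ideals containing $a$; an ideal $I$ is a $z$-ideal if $a\in I\Rightarrow M(a)\subseteq I$. *)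

(* Defs.v *)
From HB Require Import structures.
From mathcomp Require Import all_boot all_order all_algebra.
From mathcomp Require Import all_classical all_reals all_analysis.
Set Implicit Arguments. Unset Strict Implicit. Unset Printing Implicit Defensive.
Import Order.TTheory GRing.Theory Num.Theory.
Import numFieldNormedType.Exports.
Local Open Scope classical_set_scope.
Local Open Scope ring_scope.

Section CXP.
Variables (R : realType) (X : topologicalType).

Definition closed_ideal (P : set (set X)) : Prop :=
  [/\ P !=set0,
      (forall A, P A -> closed A),
      (forall A B, P A -> P B -> P (A `|` B)) &
      (forall A B, P B -> closed A -> A `<=` B -> P A)].

Definition discont (f : X -> R) : set X := [set x : X | ~ {for x, continuous f}].

Definition CXP (P : set (set X)) : set (X -> R) :=
  [set f | P (closure (discont f))].

Section RingNotions.
Variable P : set (set X).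
Local Notation C := (CXP P).

Definition is_ideal (I : set (X -> R)) : Prop :=
  [/\ I `<=` C, I (fun _ => 0),
      (forall f g, I f -> I g -> I (fun x => f x + g x)),
      (forall f, I f -> I (fun x => - f x)) &
      (forall f g, C f -> I g -> I (fun x => f x * g x))].

Definition nonzero_ideal (J : set (X -> R)) : Prop :=
  is_ideal J /\ exists f, J f /\ f <> (fun _ => 0).

Definition essential_ideal (I : set (X -> R)) : Prop :=
  is_ideal I /\ forall J, nonzero_ideal J ->
    exists f, I f /\ J f /\ f <> (fun _ => 0).

Definition maximal_ideal (M : set (X -> R)) : Prop :=
  [/\ is_ideal M, M <> C &
      forall J, is_ideal J -> M `<=` J -> J = M \/ J = C].

Definition Mof (a : X -> R) : set (X -> R) :=
  [set f | C f /\ forall M, maximal_ideal M -> M a -> M f].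

Definition z_ideal (I : set (X -> R)) : Prop :=
  is_ideal I /\ forall a, I a -> Mof a `<=` I.

Definition vN_regular : Prop :=
  forall a, C a -> exists b, C b /\ a = (fun x => a x * a x * b x).

End RingNotions.
End CXP.

Definition PP_space (R : realType) (X : topologicalType) (P : set (set X)) :=
  @vN_regular R X P.

(* Main.v *)
Require Import Defs.
From mathcomp Require Import all_boot all_order all_algebra.
From mathcomp Require Import all_classical all_reals all_analysis.
From mathcomp Require Import ring.
Import Order.TTheory GRing.Theory Num.Theory.
Import numFieldNormedType.Exports.
Local Open Scope classical_set_scope.
Local Open Scope ring_scope.

Section Aux.
Variables (R : realType) (X : topologicalType) (P : set (set X)).
Hypothesis HP : closed_ideal P.
Local Notation C := (@CXP R X P).

Lemma C_sub (h f g : X -> R) :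
  @discont R X h `<=` @discont R X f `|` @discont R X g ->
  C f -> C g -> C h.
Proof.
move=> sub Cf Cg; case: HP => _ _ PU PS.
rewrite /CXP /=.
apply: (PS _ (closure (discont f) `|` closure (discont g))).
- exact: PU.
- exact: closed_closure.
- rewrite -closureU; exact: closureS.
Qed.

Lemma C_cst (c : R) : C (fun _ => c).
Proof.
case: HP => [[A PA] Pcl _ PS].
rewrite /CXP /=.
have -> : @discont R X (fun _ => c) = set0.
  apply/seteqP; split=> x //= H; exfalso; apply: H; exact: cvg_cst.
rewrite closure0; apply: (PS _ A PA) => //; exact: closed0.
Qed.

Lemma C_add f g : C f -> C g -> C (fun x => f x + g x).
Proof.
apply: C_sub => x /= H; apply: contrapT => /not_orP [Hf Hg]; apply: H.
move/contrapT: Hf => Hf; move/contrapT: Hg => Hg.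
exact: (cvgD Hf Hg).
Qed.

Lemma C_mul f g : C f -> C g -> C (fun x => f x * g x).
Proof.
apply: C_sub => x /= H; apply: contrapT => /not_orP [Hf Hg]; apply: H.
move/contrapT: Hf => Hf; move/contrapT: Hg => Hg.
exact: (cvgM Hf Hg).
Qed.

Lemma C_opp f : C f -> C (fun x => - f x).
Proof.
move=> Cf; apply: (@C_sub _ f f) => // x /= H; left => Hf; apply: H.
exact: (cvgN Hf).
Qed.


Lemma set_app (S : set (X -> R)) f g : S f -> f = g -> S g.
Proof. by move=> + <-. Qed.

Lemma C1 : C (fun _ => 1). Proof. exact: C_cst. Qed.

Lemma ideal_mulC (I : set (X -> R)) f g :
  is_ideal P I -> C f -> I g -> I (fun x => f x * g x).
Proof. by case=> _ _ _ _ H; apply: H. Qed.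

Lemma pt_maximal (x0 : X) :
  maximal_ideal P [set f | C f /\ f x0 = 0].
Proof.
split.
- split.
  + by move=> f [].
  + by split; [exact: C_cst|].
  + by move=> f g [Cf f0] [Cg g0]; split; [exact: C_add | rewrite f0 g0 addr0].
  + by move=> f [Cf f0]; split; [exact: C_opp | rewrite f0 oppr0].
  + by move=> f g Cf [Cg g0]; split; [exact: C_mul | rewrite g0 mulr0].
- move=> E; have : C (fun _ => 1) by exact: C1.
  by rewrite -E => -[_ /= /eqP]; rewrite oner_eq0.
- move=> J HJ sub.
  have [[f [Jf fx0]] | N] := pselect (exists f, J f /\ f x0 != 0).
  + right; apply/seteqP; split; first by case: HJ.
    move=> h Ch.
    pose c := (f x0)^-1.
    have Jcf : J (fun x => c * f x) by apply: ideal_mulC => //; exact: C_cst.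
    have Cf : C f by case: HJ => + _ _ _ _; apply.
    have Ccf : C (fun x => c * f x) by apply: C_mul => //; exact: C_cst.
    have J1 : J (fun x => 1 - c * f x).
      apply: sub; split.
        by apply: C_add; [exact: C_cst | exact: C_opp].
      by rewrite /c mulVf // subrr.
    case: (HJ) => _ _ JD _ _.
    have := JD _ _ (@ideal_mulC J h _ HJ Ch Jcf) (@ideal_mulC J h _ HJ Ch J1).
    congr J; apply: funext => x /=; ring.
  + left; apply/seteqP; split => // f Jf; split.
      by case: HJ => + _ _ _ _; apply.
    by apply/eqP; apply: contrapT => H; apply: N; exists f; split => //; apply/negP.
Qed.


Lemma ideal_C (I : set (X -> R)) f : is_ideal P I -> I f -> C f.
Proof. by case=> + _ _ _ _; apply. Qed.

Lemma max_prime M a : maximal_ideal P M -> C a -> M (fun x => a x * a x) -> M a.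
Proof.
move=> [HM MC Mmax] Ca Ma2; apply: contrapT => nMa.
pose J := [set h | exists m c, M m /\ C c /\ h = (fun x => m x + c x * a x)].
have HJ : is_ideal P J.
  case: (HM) => MsubC M0 MD MN MMul.
  split.
  - move=> h [m [c [Mm [Cc ->]]]]; apply: C_add; first exact: MsubC.
    exact: C_mul.
  - exists (fun _ => 0), (fun _ => 0); split => //; split; first exact: C_cst.
    by apply: funext => x /=; ring.
  - move=> f g [m1 [c1 [M1 [C1' ->]]]] [m2 [c2 [M2 [C2 ->]]]].
    exists (fun x => m1 x + m2 x), (fun x => c1 x + c2 x); split; first exact: MD.
    split; first exact: C_add.
    by apply: funext => x /=; ring.
  - move=> f [m1 [c1 [M1 [C1' ->]]]].
    exists (fun x => - m1 x), (fun x => - c1 x); split; first exact: MN.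
    split; first exact: C_opp.
    by apply: funext => x /=; ring.
  - move=> k f Ck [m1 [c1 [M1 [C1' ->]]]].
    exists (fun x => k x * m1 x), (fun x => k x * c1 x); split; first exact: MMul.
    split; first exact: C_mul.
    by apply: funext => x /=; ring.
have MJ : M `<=` J.
  move=> m Mm; exists m, (fun _ => 0); split => //; split; first exact: C_cst.
  by apply: funext => x /=; ring.
have Ja : J a.
  exists (fun _ => 0), (fun _ => 1); split; first by case: HM.
  split; first exact: C_cst.
  by apply: funext => x /=; ring.
case: (Mmax J HJ MJ) => EJ.
  by apply: nMa; rewrite -EJ.
have : J (fun _ => 1) by rewrite EJ; exact: C1.
move=> [m [c [Mm [Cc E]]]].
case: (HM) => MsubC M0 MD MN MMul.
have := MD _ _ (MMul _ _ Ca Mm) (MMul _ _ Cc Ma2).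
move=> K; apply: nMa; apply: (set_app _ _ _ K); apply: funext => x /=; apply: esym.
have := congr1 (fun h => h x) E => /= E1.
transitivity (a x * 1); first by ring.
by rewrite E1; ring.
Qed.

Lemma dir1 : @vN_regular R X P -> forall I, @essential_ideal R X P I -> @z_ideal R X P I.
Proof.
move=> vN I [HI _]; split => // a Ia f [Cf Hf].
have Ca : C a := ideal_C _ _ HI Ia.
have [b [Cb Eab]] := vN a Ca.
have Z : forall x, a x = 0 -> f x = 0.
  by move=> x ax; have [] := Hf _ (pt_maximal x) (conj Ca ax).
have := @ideal_mulC I _ _ HI (C_mul _ _ Cf Cb) Ia.
move=> K; apply: (set_app _ _ _ K); apply: funext => x /=; apply: esym.
have [ax0|ax0] := eqVneq (a x) 0.
  by rewrite Z // !mul0r.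
have := congr1 (fun h => h x) Eab => /= E.
have abx : a x * b x = 1.
  apply: (mulfI ax0); rewrite mulr1 [RHS]E; ring.
by rewrite -mulrA [b x * a x]mulrC abx mulr1.
Qed.

Lemma dir2 : (forall I, @essential_ideal R X P I -> @z_ideal R X P I) -> @vN_regular R X P.
Proof.
move=> H a Ca.
pose I := [set h | exists c g, C c /\ C g /\ (forall x, g x * a x = 0) /\
   h = (fun x => c x * (a x * a x) + g x)].
have HI : is_ideal P I.
  split.
  - move=> h [c [g [Cc [Cg [_ ->]]]]]; apply: C_add => //.
    by apply: C_mul => //; exact: C_mul.
  - exists (fun _ => 0), (fun _ => 0); split; first exact: C_cst.
    split; first exact: C_cst.
    by split; [move=> x; rewrite mul0r | apply: funext => x /=; ring].
  - move=> f g [c1 [g1 [C1' [G1 [A1 ->]]]]] [c2 [g2 [C2 [G2 [A2 ->]]]]].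
    exists (fun x => c1 x + c2 x), (fun x => g1 x + g2 x); split; first exact: C_add.
    split; first exact: C_add.
    split; first by move=> x; rewrite mulrDl A1 A2 addr0.
    by apply: funext => x /=; ring.
  - move=> f [c1 [g1 [C1' [G1 [A1 ->]]]]].
    exists (fun x => - c1 x), (fun x => - g1 x); split; first exact: C_opp.
    split; first exact: C_opp.
    split; first by move=> x; rewrite mulNr A1 oppr0.
    by apply: funext => x /=; ring.
  - move=> k f Ck [c1 [g1 [C1' [G1 [A1 ->]]]]].
    exists (fun x => k x * c1 x), (fun x => k x * g1 x); split; first exact: C_mul.
    split; first exact: C_mul.
    split; first by move=> x; rewrite -mulrA A1 mulr0.
    by apply: funext => x /=; ring.
have EI : essential_ideal P I.
  split => // J [HJ [f [Jf fn0]]].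
  have Cf := ideal_C _ _ HJ Jf.
  have [fa0|] := pselect (forall x, f x * a x = 0).
    exists f; split => //; exists (fun _ => 0), f; split; first exact: C_cst.
    split => //; split => //.
    by apply: funext => x /=; ring.
  move=> /existsNP [x0 /eqP fax0].
  exists (fun x => (a x * a x) * f x); split.
    exists f, (fun _ => 0); split => //; split; first exact: C_cst.
    split; first by move=> x; rewrite mul0r.
    by apply: funext => x /=; ring.
  split; first by apply: ideal_mulC => //; exact: C_mul.
  move=> /(congr1 (fun h => h x0)) /= /eqP.
  move: fax0; rewrite mulf_eq0 negb_or => /andP [f0 a0].
  by apply/negP; rewrite !mulf_neq0.
have [_ Z] := H I EI.
have Ia2 : I (fun x => a x * a x).
  exists (fun _ => 1), (fun _ => 0); split; first exact: C_cst.
  split; first exact: C_cst.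
  split; first by move=> x; rewrite mul0r.
  by apply: funext => x /=; ring.
have Ia : I a.
  apply: (Z _ Ia2); split => // M MM; exact: max_prime.
case: Ia => c [g [Cc [Cg [Ag Ea]]]].
exists c; split => //; apply: funext => x /=.
have := congr1 (fun h => h x) Ea => /= E.
have [ax0|ax0] := eqVneq (a x) 0; first by rewrite ax0 !mul0r.
have gx0 : g x = 0 by have := Ag x => /eqP; rewrite mulf_eq0 (negbTE ax0) orbF => /eqP.
by rewrite [in LHS]E gx0 addr0 mulrC.
Qed.

End Aux.

Theorem corollary2p19 (R : realType) (X : topologicalType) (P : set (set X)) :
  accessible_space X -> closed_ideal P ->
  (PP_space R P <-> forall I, @essential_ideal R X P I -> @z_ideal R X P I).
Proof.
move=> _ HP; split; [exact: dir1 | exact: dir2].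
Qed.
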